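(* Let $S=(G,-1,q)$ be a quaternionic structure with abstract 2-Brauer group $B=B(S)$. Then: (a) $B$ is a boolean group (every element is its own inverse) whose neutral element is $0=q(1,1)$. (b) For all $\alpha\in\mathbb N_0$ and $a,b\in G$, $q(a^\alpha,b)=q(a,b)^\alpha=q(a,b^\alpha)$ (powers taken in $B$). (c) If $S$ has finite order $n$, then $\dim_{\mathbb F_2}B\le\binom n2$ if $-1=1$, and $\dim_{\mathbb F_2}B\le\binom n2+1$ if $-1\neq1$.
   Context: A quaternionic structure is a triple $S=(G,-1,q)$ where $G$ is a multiplicative group in which every element is its own inverse (viewed as $\mathbb F_2$-vector space), $-1\in G$ is a distinguished element (possibly $-1=1$), $-a:=(-1)a$, and $q:G\times G\to Q$ is a surjective map onto a set $Q$ with distinguished element $0$, such that for all $a,b,c,d\in G$: (Q1) $q(a,-a)=0$; (Q2) $q(a,b)=q(b,a)$; (Q3) $q(a,b)=q(a,c)\iff q(a,bc)=0$; (Q4) $q(a,b)=q(c,d)\iff$ there is $x\in G$ with $q(a,b)=q(a,x)=q(c,x)=q(c,d)$. The order of $S$ is $\dim_{\mathbb F_2}G$. The abstract 2-Brauer group $B(S)$ is the abelian group, with operation written $\ast$, generated by the set $Q$ subject only to the relations $q(a,b)\ast q(a,c)=q(a,bc)$ for all $a,b,c\in G$ (the linkage relations). *)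

(* Defs.v *)
From mathcomp Require Import all_boot.
Set Implicit Arguments. Unset Strict Implicit. Unset Printing Implicit Defensive.

(* G is a multiplicative group in
   which every element is its own inverse (associativity, left identity,
   x*x = 1 give a group; commutativity follows).  q : G x G -> Q is
   surjective onto a set Q with distinguished element qzero. *)
Record qstruct := QStruct {
  qG : Type;
  qmul : qG -> qG -> qG;
  qone : qG;
  qm1 : qG;
  qQ : Type;
  qzero : qQ;
  q : qG -> qG -> qQ;
  qmulA : forall a b c, qmul a (qmul b c) = qmul (qmul a b) c;
  qmul1 : forall a, qmul qone a = a;
  qmulxx : forall a, qmul a a = qone;
  q_surj : forall x : qQ, exists a b, q a b = x;
  qQ1 : forall a, q a (qmul qm1 a) = qzero;
  qQ2 : forall a b, q a b = q b a;
  qQ3 : forall a b c, q a b = q a c <-> q a (qmul b c) = qzero;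
  qQ4 : forall a b c d, q a b = q c d <->
          exists x, [/\ q a b = q a x, q a x = q c x & q c x = q c d]
}.

Definition gexp (S : qstruct) (a : qG S) (n : nat) : qG S := iter n (qmul a) (qone S).

Definition gprod (S : qstruct) (l : seq (qG S)) : qG S := foldr (@qmul S) (qone S) l.

(* S has finite order n : G has an F_2-basis of n elements, i.e. a list s of
   length n such that every element of G is the product of exactly one
   sub-family of s. *)
Definition has_order (S : qstruct) (n : nat) : Prop :=
  exists s : seq (qG S), size s = n /\
    (forall g, exists m : bitseq, size m = n /\ g = gprod (mask m s)) /\
    (forall m1 m2 : bitseq, size m1 = n -> size m2 = n ->
        gprod (mask m1 s) = gprod (mask m2 s) -> m1 = m2).

(* Abstract 2-Brauer group B(S): the abelian group generated by Q subject only
   to the linkage relations.  Elements are represented by formal abelian-group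
   expressions in the generators; [beq S] is the congruence generated by the
   abelian group axioms and the linkage relations, so B(S) = bexpr / beq. *)
Inductive bexpr (Q : Type) : Type :=
| BGen of Q
| BZero
| BAdd of bexpr Q & bexpr Q
| BNeg of bexpr Q.
Arguments BZero {Q}.

Inductive beq (S : qstruct) : bexpr (qQ S) -> bexpr (qQ S) -> Prop :=
| beq_refl e : beq e e
| beq_sym e1 e2 : beq e1 e2 -> beq e2 e1
| beq_trans e1 e2 e3 : beq e1 e2 -> beq e2 e3 -> beq e1 e3
| beq_addc e1 e2 f1 f2 : beq e1 e2 -> beq f1 f2 -> beq (BAdd e1 f1) (BAdd e2 f2)
| beq_negc e1 e2 : beq e1 e2 -> beq (BNeg e1) (BNeg e2)
| beq_addA e1 e2 e3 : beq (BAdd e1 (BAdd e2 e3)) (BAdd (BAdd e1 e2) e3)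
| beq_addC e1 e2 : beq (BAdd e1 e2) (BAdd e2 e1)
| beq_add0 e : beq (BAdd BZero e) e
| beq_addN e : beq (BAdd (BNeg e) e) BZero
| beq_link a b c : beq (BAdd (BGen (q a b)) (BGen (q a c))) (BGen (q a (qmul b c))).

Arguments beq : clear implicits.

(* n-fold sum (the power x^n, written additively, in B) *)
Definition bmuln (Q : Type) (e : bexpr Q) (n : nat) : bexpr Q := iter n (BAdd e) BZero.

Definition bsum (Q : Type) (l : seq (bexpr Q)) : bexpr Q := foldr (@BAdd Q) BZero l.

(* dim_{F_2} B(S) <= N (for B(S) boolean): B(S) is spanned over F_2 by at most
   N elements, i.e. every element is the sum of a sub-family of them. *)
Definition bdim_le (S : qstruct) (N : nat) : Prop :=
  exists s : seq (bexpr (qQ S)), size s <= N /\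
    forall e, exists m : bitseq, beq S e (bsum (mask m s)).

(* Main.v *)
From Stdlib Require Import Setoid Morphisms.
Require Import Defs.
From mathcomp Require Import all_boot.

Set Implicit Arguments. Unset Strict Implicit.
#[export] Hint Resolve beq_refl : core.

#[export] Instance beq_Equiv (S : qstruct) : Equivalence (beq S).
Proof. split. exact: beq_refl. exact: beq_sym. exact: beq_trans. Qed.

#[export] Instance BAdd_Proper (S : qstruct) :
  Proper (beq S ==> beq S ==> beq S) (@BAdd (qQ S)).
Proof. by move=> ? ? H ? ? H'; apply: beq_addc. Qed.

#[export] Instance BNeg_Proper (S : qstruct) :
  Proper (beq S ==> beq S) (@BNeg (qQ S)).
Proof. by move=> ? ? H; apply: beq_negc. Qed.

Lemma addA (S : qstruct) (a b c : bexpr (qQ S)) :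
  beq S (BAdd a (BAdd b c)) (BAdd (BAdd a b) c).
Proof. exact: beq_addA. Qed.
Lemma addC (S : qstruct) (a b : bexpr (qQ S)) : beq S (BAdd a b) (BAdd b a).
Proof. exact: beq_addC. Qed.
Lemma add0 (S : qstruct) (a : bexpr (qQ S)) : beq S (BAdd BZero a) a.
Proof. exact: beq_add0. Qed.
Lemma addr0 (S : qstruct) (a : bexpr (qQ S)) : beq S (BAdd a BZero) a.
Proof. rewrite addC add0; reflexivity. Qed.

Lemma swap4 (S : qstruct) (a b c d : bexpr (qQ S)) :
  beq S (BAdd (BAdd a b) (BAdd c d)) (BAdd (BAdd a c) (BAdd b d)).
Proof.
rewrite -addA (addA b c d) (addC b c) -(addA c b d) addA. reflexivity.
Qed.

Lemma mulr1 (S : qstruct) (a : qG S) : qmul a (qone S) = a.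
Proof. by rewrite -(qmulxx a) qmulA qmulxx qmul1. Qed.

Lemma qa1 (S : qstruct) (a : qG S) : q a (qone S) = qzero S.
Proof. rewrite -(qmulxx a); exact: (proj1 (qQ3 a a a) erefl). Qed.

Lemma zero_beq (S : qstruct) : beq S (BGen (qzero S)) BZero.
Proof.
set g := BGen (qzero S).
have gg : beq S (BAdd g g) g.
  by rewrite /g -(qa1 (qone S)) beq_link qmulxx; reflexivity.
rewrite -(add0 g) -(beq_addN g) -addA gg. reflexivity.
Qed.

Lemma gen_bool (S : qstruct) (x : qQ S) : beq S (BAdd (BGen x) (BGen x)) BZero.
Proof.
have [a [b <-]] := q_surj x.
by rewrite beq_link qmulxx qa1 zero_beq.
Qed.

Lemma all_bool (S : qstruct) (e : bexpr (qQ S)) : beq S (BAdd e e) BZero.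
Proof.
elim: e => [x||e IHe f IHf|e IHe].
- exact: gen_bool.
- exact: add0.
- by rewrite swap4 IHe IHf add0.
- have -> : beq S (BNeg e) e.
    rewrite -(addr0 (BNeg e)) -IHe addA beq_addN add0; reflexivity.
  exact: IHe.
Qed.

Lemma neg_id (S : qstruct) (e : bexpr (qQ S)) : beq S (BNeg e) e.
Proof. rewrite -(addr0 (BNeg e)) -(all_bool e) addA beq_addN add0; reflexivity. Qed.

Lemma bool_cancel (S : qstruct) (a b : bexpr (qQ S)) :
  beq S (BAdd a b) BZero -> beq S b a.
Proof.
move=> H. rewrite -(add0 b) -(all_bool a) -addA H addr0; reflexivity.
Qed.

Lemma partb1 (S : qstruct) (n : nat) (a b : qG S) :
  beq S (BGen (q (gexp a n) b)) (bmuln (BGen (q a b)) n).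
Proof.
elim: n => [|n IH] /=.
- by rewrite /gexp /= qQ2 qa1 zero_beq; reflexivity.
- rewrite /gexp /= qQ2 -beq_link (qQ2 b a) (qQ2 b) -IH; reflexivity.
Qed.

Lemma partb2 (S : qstruct) (n : nat) (a b : qG S) :
  beq S (bmuln (BGen (q a b)) n) (BGen (q a (gexp b n))).
Proof.
elim: n => [|n IH] /=.
- by rewrite /gexp /= qa1 zero_beq; reflexivity.
- rewrite /gexp /= -beq_link IH; reflexivity.
Qed.

Definition spanP (S : qstruct) (T : seq (bexpr (qQ S))) e :=
  exists m : bitseq, beq S e (bsum (mask m T)).

Fixpoint inl (A : Type) (x : A) (l : seq A) : Prop :=
  match l with [::] => False | y :: l' => y = x \/ inl x l' end.

Lemma span0 (S : qstruct) T : spanP (S:=S) T BZero.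
Proof. exists [::]; simpl; reflexivity. Qed.

Lemma span_beq (S : qstruct) T e f : spanP (S:=S) T e -> beq S e f -> spanP T f.
Proof. by move=> [m Hm] H; exists m; rewrite -H. Qed.

Lemma span_in (S : qstruct) T e : inl e T -> spanP (S:=S) T e.
Proof.
elim: T => [//|t T IH] /= [<-|/IH [m Hm]].
- by exists [:: true]; rewrite /= addr0.
- by exists (false :: m).
Qed.

Lemma span_add (S : qstruct) T e f :
  spanP (S:=S) T e -> spanP T f -> spanP T (BAdd e f).
Proof.
move=> [m1 H1] [m2 H2].
suff [m3 H3] : exists m3, beq S (BAdd (bsum (mask m1 T)) (bsum (mask m2 T))) (bsum (mask m3 T)).
  by exists m3; rewrite H1 H2.
clear H1 H2 e f.
elim: T m1 m2 => [|t T IH] m1 m2.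
  by exists [::]; rewrite !mask0 /= add0.
case: m1 => [|b1 m1]; first by exists m2; rewrite /= add0; reflexivity.
case: m2 => [|b2 m2]; first by exists (b1 :: m1); rewrite /= addr0; reflexivity.
have [m3 H3] := IH m1 m2.
case: b1; case: b2 => /=.
- exists (false :: m3) => /=; rewrite swap4 all_bool add0 H3; reflexivity.
- exists (true :: m3) => /=; rewrite -addA H3; reflexivity.
- exists (true :: m3) => /=; rewrite addA (addC _ t) -addA H3; reflexivity.
- by exists (false :: m3).
Qed.

Inductive gen (S : qstruct) (l : seq (qG S)) : qG S -> Prop :=
| gen1 : gen l (qone S)
| genM x g : inl x l -> gen l g -> gen l (qmul x g).

Lemma genMM (S : qstruct) l (a b : qG S) : gen l a -> gen l b -> gen l (qmul a b).
Proof.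
elim=> [|x g Hx Hg IH] Hb; first by rewrite qmul1.
rewrite -qmulA; apply: genM => //; exact: IH.
Qed.

Lemma gen_sub (S : qstruct) (l l' : seq (qG S)) g :
  (forall x, inl x l -> gen l' x) -> gen l g -> gen l' g.
Proof.
move=> Hs; elim=> [|x h Hx _ IH]; first exact: gen1.
exact: genMM (Hs _ Hx) IH.
Qed.

Lemma gen_in (S : qstruct) (l : seq (qG S)) x : inl x l -> gen l x.
Proof. by move=> H; rewrite -(mulr1 x); apply: genM => //; exact: gen1. Qed.

Lemma inl_mask (A : Type) (m : bitseq) (l : seq A) x : inl x (mask m l) -> inl x l.
Proof.
elim: l m => [|y l IH] [|[] m] //=.
- by case=> [->|/IH]; [left|right].
- by move/IH; right.
Qed.

Lemma gen_prod (S : qstruct) (l l' : seq (qG S)) :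
  (forall x, inl x l' -> inl x l) -> gen l (gprod l').
Proof.
elim: l' => [|y l' IH] H /=; first exact: gen1.
apply: genM; first by apply: H; left.
by apply: IH => x Hx; apply: H; right.
Qed.

Lemma span_q (S : qstruct) T (l : seq (qG S)) :
  (forall x y, inl x l -> inl y l -> spanP T (BGen (q x y))) ->
  forall a b, gen l a -> gen l b -> spanP T (BGen (q a b)).
Proof.
move=> H a b Ha.
have Hay : forall y, inl y l -> spanP T (BGen (q a y)).
  elim: Ha => [|x g Hx Hg IH] y Hy.
  - by apply: span_beq (@span0 S _) _; rewrite qQ2 qa1 zero_beq; reflexivity.
  - rewrite qQ2; apply: span_beq; last by apply: beq_link.
    by apply: span_add; rewrite qQ2; [exact: H | exact: IH].
elim=> [|x g Hx Hg IH].
- by apply: span_beq (@span0 S _) _; rewrite qa1 zero_beq; reflexivity.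
- apply: span_beq; last by apply: beq_link.
  by apply: span_add; [exact: Hay | exact: IH].
Qed.

Lemma span_all (S : qstruct) T (l : seq (qG S)) :
  (forall g, gen l g) ->
  (forall x y, inl x l -> inl y l -> spanP T (BGen (q x y))) ->
  forall e, spanP T e.
Proof.
move=> Hg H; elim=> [x||e IHe f IHf|e IHe].
- have [a [b <-]] := q_surj x; exact: (span_q H (Hg a) (Hg b)).
- exact: span0.
- exact: span_add.
- by apply: span_beq IHe _; rewrite neg_id; reflexivity.
Qed.

Fixpoint pairs (S : qstruct) (s : seq (qG S)) : seq (bexpr (qQ S)) :=
  match s with
  | [::] => [::]
  | x :: s' => map (fun y => BGen (q x y)) s' ++ pairs s'
  end.

Lemma size_pairs (S : qstruct) (s : seq (qG S)) : size (pairs s) = 'C(size s, 2).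
Proof.
elim: s => [//|x s IH] /=.
by rewrite size_cat size_map IH binS bin1 addnC.
Qed.

Lemma inl_app (A : Type) (x : A) l1 l2 : inl x l1 \/ inl x l2 -> inl x (l1 ++ l2).
Proof. elim: l1 => [|y l1 IH] /=; [by case|]. by case=> [[->|H]|H]; auto. Qed.

Lemma inl_map (A B : Type) (f : A -> B) x l : inl x l -> inl (f x) (map f l).
Proof. elim: l => [//|y l IH] /= [->|H]; auto. Qed.

Lemma pairs_in (S : qstruct) (s : seq (qG S)) x y :
  inl x s -> inl y s ->
  x = y \/ inl (BGen (q x y)) (pairs s) \/ inl (BGen (q y x)) (pairs s).
Proof.
elim: s => [//|z s IH] /= Hx Hy.
case: Hx => [<-|Hx]; case: Hy => [<-|Hy]; auto.
- by right; left; apply: inl_app; left; apply: (inl_map (fun y => BGen (q z y))).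
- by right; right; apply: inl_app; left; apply: (inl_map (fun y => BGen (q z y))).
- by case: (IH Hx Hy) => [|[H|H]]; auto; right; [left|right]; apply: inl_app; right.
Qed.

Lemma first_true (A : Type) (m : bitseq) (s : seq A) : mask m s <> [::] ->
  exists s1 z s2 m2, s = s1 ++ z :: s2 /\ mask m s = z :: mask m2 s2.
Proof.
elim: s m => [|x s IH] [|[] m] //= H.
- by exists [::], x, s, m.
- have [s1 [z [s2 [m2 [-> ->]]]]] := IH _ H.
  by exists (x :: s1), z, s2, m2.
Qed.

Lemma inl_app_inv (A : Type) (x : A) l1 l2 : inl x (l1 ++ l2) -> inl x l1 \/ inl x l2.
Proof. elim: l1 => [|y l1 IH] /=; [by right|]. by case=> [->|/IH [H|H]]; auto. Qed.

Theorem lemma4 (S : qstruct) :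
  (* (a) B is boolean, with neutral element 0 = q(1,1) *)
  ((forall e : bexpr (qQ S), beq S (BAdd e e) BZero) /\
   qzero S = q (qone S) (qone S) /\ beq S (BGen (qzero S)) BZero) /\
  (* (b) q(a^alpha, b) = q(a,b)^alpha = q(a, b^alpha) in B *)
  (forall (alpha : nat) (a b : qG S),
     beq S (BGen (q (gexp a alpha) b)) (bmuln (BGen (q a b)) alpha) /\
     beq S (bmuln (BGen (q a b)) alpha) (BGen (q a (gexp b alpha)))) /\
  (* (c) dimension bounds for finite order n *)
  (forall n : nat, has_order S n ->
     (qm1 S = qone S -> bdim_le S 'C(n, 2)) /\
     (qm1 S <> qone S -> bdim_le S ('C(n, 2) + 1))).
Proof.
split; first by split; [exact: all_bool | split; [by rewrite qa1 | exact: zero_beq]].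
split; first by move=> al a b; split; [exact: partb1 | exact: partb2].
move=> n [s [Hsz [Hsp _]]].
have Hgen : forall g, gen s g.
  by move=> g; have [m [_ ->]] := Hsp g; apply: gen_prod => x; apply: inl_mask.
have diag : forall x : qG S, beq S (BGen (q x x)) (BGen (q x (qm1 S))).
  move=> x; apply: bool_cancel; rewrite beq_link qQ1; exact: zero_beq.
split=> Hm1.
- exists (pairs s); rewrite size_pairs Hsz; split=> //.
  apply: (span_all Hgen) => x y Hx Hy.
  case: (pairs_in Hx Hy) => [<-|[H|H]].
  + apply: span_beq (@span0 S _) _; rewrite diag Hm1 qa1 zero_beq; reflexivity.
  + exact: span_in.
  + by apply: span_beq (span_in H) _; rewrite qQ2; reflexivity.
- have [m [_ Hm]] := Hsp (qm1 S).
  have ne : mask m s <> [::] by move=> E; apply: Hm1; rewrite Hm E.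
  have [s1 [z [s2 [m2 [Es Emask]]]]] := first_true ne.
  set s' := qm1 S :: (s1 ++ s2).
  have Hg' : forall g, gen s' g.
    move=> g; apply: (gen_sub _ (Hgen g)) => x.
    rewrite Es => Hin; case: (inl_app_inv Hin) => [Hx|[<-|Hx]].
    + by apply: gen_in; right; apply: inl_app; left.
    + set h := gprod (mask m2 s2).
      have -> : z = qmul (qm1 S) h.
        by rewrite Hm Emask /= -qmulA qmulxx mulr1.
      apply: genMM; first by apply: gen_in; left.
      by apply: gen_prod => y Hy; right; apply: inl_app; right; exact: (inl_mask Hy).
    + by apply: gen_in; right; apply: inl_app; right.
  exists (BGen (q (qm1 S) (qm1 S)) :: pairs s'); split.
    have Hp : size (pairs s') = 'C(n, 2).
      by rewrite size_pairs -Hsz Es /s' /= !size_cat /= addnS.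
    by rewrite -[size (_ :: _)]/((size (pairs s')).+1) Hp addn1.
  apply: (span_all Hg') => x y Hx Hy.
  case: (pairs_in Hx Hy) => [<-|[H|H]].
  + case: Hx => [<-|Hx]; first by apply: span_in; left.
    apply: span_beq; last by rewrite diag qQ2; reflexivity.
    by apply: span_in; right; rewrite /s' /=; apply: inl_app; left;
       apply: (inl_map (fun y => BGen (q (qm1 S) y))).
  + by apply: span_in; right.
  + apply: (@span_beq S _ (BGen (q y x))); first by apply: span_in; right.
    by rewrite qQ2.
Qed.
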